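(* Let $S$ be a numerical semigroup with minimal generators $e<a_1<\dots<a_t$, and let $s\in S$. If $(x_0,x_1,\dots,x_t)$ is a $B^{\mathcal D}$-factorization of ${\rm adj}(s)$ of length at most ${\rm ord}(s;S)$, then $x_0=0$.
   Context: A numerical semigroup is a submonoid of $(\mathbb N,+)$ with finite complement. An $S$-factorization of $n$ is $(c_0,\dots,c_t)\in\mathbb N^{t+1}$ with $c_0e+\sum c_ia_i=n$, of length $\sum c_i$. ${\rm ord}(n;S)$ is the maximal such length. Let $d_i=a_i-e$, $B=\langle e,d_1,\dots,d_t\rangle$, $\mathcal D=(e,d_1,\dots,d_t)$. A $B^{\mathcal D}$-factorization of $b$ is $(x_0,\dots,x_t)\in\mathbb N^{t+1}$ with $x_0e+\sum x_id_i=b$, of length $\sum x_i$. The adjustment of $s$ is ${\rm adj}(s)=s-{\rm ord}(s;S)e$. *)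

(* Defs.v *)
From mathcomp Require Import all_boot.
Set Implicit Arguments. Unset Strict Implicit. Unset Printing Implicit Defensive.

(* Generators of S, indexed by 'I_t.+1: index 0 is e, index (lift ord0 j) is a_(j+1). *)
Definition gens (e t : nat) (a : 'I_t -> nat) (i : 'I_t.+1) : nat :=
  match unlift ord0 i with None => e | Some j => a j end.

Definition Dgens (e t : nat) (a : 'I_t -> nat) (i : 'I_t.+1) : nat :=
  match unlift ord0 i with None => e | Some j => a j - e end.

Definition is_fact (t : nat) (g : 'I_t.+1 -> nat) (n : nat) (c : 'I_t.+1 -> nat) : Prop :=
  \sum_(i < t.+1) c i * g i = n.

Definition flen (t : nat) (c : 'I_t.+1 -> nat) : nat := \sum_(i < t.+1) c i.

Definition inSg (t : nat) (g : 'I_t.+1 -> nat) (n : nat) : Prop := exists c, is_fact g n c.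

Definition min_gens_numsgp (e t : nat) (a : 'I_t -> nat) : Prop :=
  [/\ 0 < e,
      (forall i, e < a i),
      (forall i j : 'I_t, i < j -> a i < a j),
      (exists N, forall n, N <= n -> inSg (gens e a) n) &
      (forall i : 'I_t.+1, ~ (exists c, c i = 0 /\ is_fact (gens e a) (gens e a i) c))].

Definition is_ord (e t : nat) (a : 'I_t -> nat) (n k : nat) : Prop :=
  (exists c, is_fact (gens e a) n c /\ flen c = k) /\
  (forall c, is_fact (gens e a) n c -> flen c <= k).

(* Main.v *)
Require Import Defs.
From mathcomp Require Import all_boot.
From mathcomp Require Import zify.

Lemma gens0 e t (a : 'I_t -> nat) : gens e a ord0 = e.
Proof. by rewrite /gens unlift_none. Qed.
Lemma gensS e t (a : 'I_t -> nat) j : gens e a (lift ord0 j) = a j.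
Proof. by rewrite /gens liftK. Qed.
Lemma Dgens0 e t (a : 'I_t -> nat) : Dgens e a ord0 = e.
Proof. by rewrite /Dgens unlift_none. Qed.
Lemma DgensS e t (a : 'I_t -> nat) j : Dgens e a (lift ord0 j) = a j - e.
Proof. by rewrite /Dgens liftK. Qed.

Theorem lemma3p2 (e t : nat) (a : 'I_t -> nat) :
  min_gens_numsgp e a ->
  forall s : nat, inSg (gens e a) s ->
  forall k : nat, is_ord e a s k ->
  (* adj(s) = s - ord(s;S) * e *)
  forall x : 'I_t.+1 -> nat,
    is_fact (Dgens e a) (s - k * e) x -> flen x <= k ->
    x ord0 = 0.
Proof.
move=> [e0 hea _ _ _] s _ k [[c [hc hlc]] hmax] x hx hlx.
have hske : k * e <= s.
  rewrite -hc -hlc /flen big_distrl /=; apply: leq_sum => i _.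
  apply: leq_mul => //; case: (unliftP ord0 i) => [j ->|->].
    by rewrite gensS; apply: ltnW.
  by rewrite gens0.
move: hx hlx; rewrite /is_fact /flen !big_ord_recl Dgens0.
under eq_bigr do rewrite DgensS.
set m := \sum_(i < t) _.
set P := \sum_(i < t) _.
move=> hx hlx.
have hA : \sum_(i < t) x (lift ord0 i) * a i = P + m * e.
  rewrite /P /m big_distrl -big_split /=; apply: eq_bigr => i _.
  rewrite -mulnDr subnK //; exact: ltnW.
pose c' := fun i : 'I_t.+1 => if i == ord0 then k + x ord0 - m else x i.
have hf : is_fact (gens e a) s c'.
  rewrite /is_fact big_ord_recl gens0 /c' eqxx.
  under eq_bigr do rewrite gensS eq_sym (negbTE (neq_lift _ _)).
  rewrite hA; nia.
have hb : \sum_(i < t) c' (lift ord0 i) = m.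
  apply: eq_bigr => i _; rewrite /c'.
  have -> : (lift ord0 i == ord0) = false by apply/negbTE; rewrite eq_sym neq_lift.
  by [].
have := hmax c' hf; rewrite /flen big_ord_recl hb /c' eqxx.
lia.
Qed.
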